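(* Let $r,q$ be positive integers, $k\ge1$, $p_1,\dots,p_k\ge1$ integers, and $s_i,a_{ij},\nu$ integers ($1\le i\le k$, $1\le j\le p_i$) with all $a_{ij}>0$. Suppose $B(n)=\lceil rn/q\rceil$ formally satisfies the recursion $R(n)=\sum_{i=1}^k R\big(n-s_i-\sum_{j=1}^{p_i}R(n-a_{ij})\big)+\nu$, and suppose $rp_i/q\le 1$ for all $i$. Then there exist a recursion $R'$ of the same form whose parameter vector is equivalent to that of $R$, and a positive integer $m$, such that $\lceil rn/q\rceil$ is the unique solution generated by $R'$ with initial conditions $R'(t)=\lceil tr/q\rceil$ for $1\le t\le m$. If moreover $rp_i/q<1$ for all $i$, then the same holds for $R$ itself (with some positive integer $m$).
   Context: A sequence $B:\mathbb{Z}\to\mathbb{Z}$ formally satisfies $R$ if for every integer $n$, $B(n)=\sum_{i=1}^k B\big(n-s_i-\sum_{j=1}^{p_i}B(n-a_{ij})\big)+\nu$. The parameter vector of $R$ is $\langle s_1;a_{11},\dots,a_{1p_1}:\cdots:s_k;a_{k1},\dots,a_{kp_k}|\nu\rangle$; equivalence of parameter vectors (with the same $k,p_i$) is the equivalence relation generated by the moves (i) replace $s_i$ by $s_i+dr$ and one $a_{ij}$ by $a_{ij}+dq$ ($d\in\mathbb{Z}$), and (ii) replace $s_i$ by $s_i+cq$ and $\nu$ by $\nu+cr$ ($c\in\mathbb{Z}$). ''$B$ is the unique solution generated by $R'$ with initial conditions $R'(t)=B(t)$, $1\le t\le m$'' means: for every $n>m$, when $R'(1),\dots,R'(n-1)$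 are given, every argument at which $R'$ must be evaluated in the right-hand side for $R'(n)$ lies in $\{1,\dots,n-1\}$, so the values $R'(n)$ are uniquely determined recursively, and the resulting sequence is $R'(n)=B(n)$ for all $n\ge1$. *)

(* Defs.v *)
From Stdlib Require Import ZArith List Relations.
Import ListNotations.
Open Scope Z_scope.

(* Ceiling of r*n/q for q > 0 (Z.div is floor division). *)
Definition ceil_div (x q : Z) : Z := - ((- x) / q).

(* A parameter vector <s_1;a_11..a_1p1 : ... : s_k;a_k1..a_kpk | nu>:
   k = length blocks, block i = (s_i, [a_i1; ...; a_ip_i]). *)
Record PV := mkPV { blocks : list (Z * list Z); nu : Z }.

Definition sumZ (l : list Z) : Z := fold_right Z.add 0 l.

Definition outer_arg (R : Z -> Z) (n : Z) (b : Z * list Z) : Z :=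
  n - fst b - sumZ (map (fun a => R (n - a)) (snd b)).

Definition rhs (R : Z -> Z) (v : PV) (n : Z) : Z :=
  sumZ (map (fun b => R (outer_arg R n b)) (blocks v)) + nu v.

Definition args (R : Z -> Z) (v : PV) (n : Z) : list Z :=
  flat_map (fun b => outer_arg R n b :: map (fun a => n - a) (snd b)) (blocks v).

Definition formally_satisfies (B : Z -> Z) (v : PV) : Prop :=
  forall n : Z, B n = rhs B v n.

(* B is the unique solution generated by v with initial conditions
   R'(t) = B(t), 1 <= t <= m: for all n > m, (with R'(1..n-1) = B(1..n-1))
   all arguments lie in {1..n-1}, and the determined value is B(n). *)
Definition generates (v : PV) (m : Z) (B : Z -> Z) : Prop :=
  forall n : Z, n > m ->
    Forall (fun t => 1 <= t <= n - 1) (args B v n) /\ B n = rhs B v n.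

Inductive pv_move (r q : Z) : PV -> PV -> Prop :=
| move_i : forall pre s as1 a as2 post nu0 d,
    pv_move r q
      (mkPV (pre ++ (s, as1 ++ a :: as2) :: post) nu0)
      (mkPV (pre ++ (s + d * r, as1 ++ (a + d * q) :: as2) :: post) nu0)
| move_ii : forall pre s as0 post nu0 c,
    pv_move r q
      (mkPV (pre ++ (s, as0) :: post) nu0)
      (mkPV (pre ++ (s + c * q, as0) :: post) (nu0 + c * r)).

Definition pv_equiv (r q : Z) : PV -> PV -> Prop :=
  clos_refl_sym_trans PV (pv_move r q).

(* Main.v *)
Require Import Defs.
From Stdlib Require Import ZArith List Relations Lia.
Import ListNotations.
Open Scope Z_scope.

Lemma ceil_bounds r q x : 0 < q -> r*x <= q * ceil_div (r*x) q <= r*x + (q - 1).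
Proof.
  intro Hq. unfold ceil_div.
  pose proof (Z.div_mod (-(r*x)) q ltac:(lia)).
  pose proof (Z.mod_pos_bound (-(r*x)) q Hq).
  set (d := (-(r*x))/q) in *. set (m := (-(r*x)) mod q) in *. nia.
Qed.

Lemma ceil_shift r q x C : 0 < q ->
  ceil_div (r*(x + C*q)) q = ceil_div (r*x) q + C*r.
Proof.
  intro Hq. unfold ceil_div.
  replace (-(r*(x+C*q))) with (-(r*x) + (-(C*r))*q) by ring.
  rewrite Z.div_add by lia. ring.
Qed.

Lemma sum_bounds r q n (l : list Z) : 0 < q ->
  let S := sumZ (map (fun a => ceil_div (r*(n-a)) q) l) in
  let p := Z.of_nat (length l) in
  r*(p*n - sumZ l) <= q*S <= r*(p*n - sumZ l) + p*(q-1).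
Proof.
  intros Hq. cbv zeta. induction l as [|a l IH]; [simpl; lia|].
  pose proof (ceil_bounds r q (n-a) Hq).
  change (length (a :: l)) with (S (length l)).
  change (map (fun a0 => ceil_div (r*(n-a0)) q) (a :: l)) with
    (ceil_div (r*(n-a)) q :: map (fun a0 => ceil_div (r*(n-a0)) q) l).
  change (sumZ (?x :: ?y)) with (x + sumZ y).
  rewrite Nat2Z.inj_succ. nia.
Qed.

Lemma sum_nonneg (l : list Z) : (forall x, In x l -> 0 < x) -> 0 <= sumZ l.
Proof.
  induction l as [|b l IH]; simpl; [lia|]. intros H.
  pose proof (H b (or_introl eq_refl)). specialize (IH ltac:(auto)). lia.
Qed.

Lemma le_sum (l : list Z) a : (forall x, In x l -> 0 < x) -> In a l -> a <= sumZ l.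
Proof.
  induction l as [|b l IH]; simpl; [tauto|].
  intros H [->|Hin].
  - pose proof (sum_nonneg l ltac:(auto)). lia.
  - pose proof (H b (or_introl eq_refl)). specialize (IH ltac:(auto) Hin). lia.
Qed.

Lemma block_ok r q s (l : list Z) : 0 < r -> 0 < q -> l <> [] ->
  (forall a, In a l -> 0 < a) ->
  r * Z.of_nat (length l) <= q ->
  (s <= - Z.of_nat (length l) \/ r * Z.of_nat (length l) < q) ->
  exists M, forall n, n > M ->
    1 <= outer_arg (fun n => ceil_div (r * n) q) n (s, l) <= n - 1 /\
    forall a, In a l -> 1 <= n - a <= n - 1.
Proof.
  intros Hr Hq Hne Hpos Hrp Hcase.
  set (p := Z.of_nat (length l)) in *.
  set (A := sumZ l).
  assert (HA : 0 <= A) by (apply sum_nonneg; auto).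
  assert (Hp : 1 <= p). { destruct l; [congruence|]. unfold p; simpl length; lia. }
  exists (r*A + q*Z.abs s + p*q + q + A). intros n Hn.
  split.
  2:{ intros a Ha. pose proof (le_sum l a Hpos Ha). pose proof (Hpos a Ha).
      assert (0 <= r*A) by nia. assert (0 <= q*Z.abs s) by nia.
      assert (0 <= p*q) by nia. lia. }
  unfold outer_arg; cbn [fst snd].
  pose proof (sum_bounds r q n l Hq) as HS. cbv zeta in HS. fold p A in HS.
  set (S := sumZ (map (fun a => ceil_div (r*(n-a)) q) l)) in *.
  assert (0 <= r*A) by nia. assert (0 <= q*Z.abs s) by nia.
  assert (0 <= p*q) by nia. assert (Hn0 : 1 <= n) by lia.
  assert (Hrp1 : 1 <= r*p) by nia.
  split.
  - assert (Hpos2 : q * (n - s - S) > 0).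
    { destruct Hcase as [Hs|Hlt].
      + assert (q*(-s-p) >= 0) by nia.
        assert ((q - r*p)*n >= 0) by nia. nia.
      + assert ((q - r*p - 1)*n >= 0) by nia.
        assert (q*s <= q*Z.abs s) by nia. nia. }
    nia.
  - assert (q*(s+S) > q).
    { assert ((r*p - 1)*n >= 0) by nia.
      assert (-(q*Z.abs s) <= q*s) by nia. nia. }
    nia.
Qed.

Lemma uniform_M {X} (P : X -> Z -> Prop) (l : list X) :
  (forall x, In x l -> exists M, forall n, n > M -> P x n) ->
  exists M, 0 < M /\ forall x n, In x l -> n > M -> P x n.
Proof.
  induction l as [|b l IH]; intros H.
  - exists 1. split; [lia|]. intros x n [].
  - destruct (H b (or_introl eq_refl)) as [M1 HM1].
    destruct IH as [M2 [HM2p HM2]]. { intros; apply H; simpl; auto. }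
    exists (Z.max M1 M2). split; [lia|].
    intros x n [<-|Hin] Hn; [apply HM1|apply HM2]; auto; lia.
Qed.

Lemma uniform_C {X} (g : X -> Z) (l : list X) :
  exists C, 0 <= C /\ forall x, In x l -> g x <= C.
Proof.
  induction l as [|b l IH].
  - exists 0. split; [lia|]. intros x [].
  - destruct IH as [C [HC H]]. exists (Z.max (Z.max C (g b)) 0). split; [lia|].
    intros x [<-|Hin]; [lia|]. specialize (H x Hin). lia.
Qed.

Lemma gen_of_blocks (B : Z -> Z) (w : PV) :
  (forall b, In b (blocks w) -> exists M, forall n, n > M ->
     1 <= outer_arg B n b <= n - 1 /\ forall a, In a (snd b) -> 1 <= n - a <= n - 1) ->
  (forall n, B n = rhs B w n) ->
  exists m, 0 < m /\ generates w m B.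
Proof.
  intros H Hf.
  destruct (uniform_M _ _ H) as [M [HM HMn]].
  exists M. split; auto. intros n Hn. split; auto.
  apply Forall_forall. intros x Hx. unfold args in Hx.
  apply in_flat_map in Hx. destruct Hx as [b [Hb Hx]].
  destruct (HMn b n Hb Hn) as [H1 H2].
  destruct Hx as [<-|Hx]; auto.
  apply in_map_iff in Hx. destruct Hx as [a [<- Ha]]. auto.
Qed.

Section Shift.
Variables (r q C : Z).
Definition fsh (b : Z * list Z) : Z * list Z := (fst b + (-C)*q, snd b).

Lemma equiv_shift (l pre : list (Z * list Z)) nu0 :
  clos_refl_sym_trans PV (pv_move r q) (mkPV (pre ++ l) nu0)
    (mkPV (pre ++ map fsh l) (nu0 + Z.of_nat (length l) * ((-C)*r))).
Proof.
  revert pre nu0. induction l as [|[s as0] l IH]; intros pre nu0.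
  - simpl. rewrite Z.add_0_r. apply rst_refl.
  - eapply rst_trans.
    + apply rst_step. apply (move_ii r q pre s as0 l nu0 (-C)).
    + specialize (IH (pre ++ [fsh (s, as0)]) (nu0 + (-C)*r)).
      rewrite <- !app_assoc in IH. cbn [app] in IH. unfold fsh at 1 in IH. cbn [fst snd] in IH.
      change (map fsh ((s, as0) :: l)) with (fsh (s,as0) :: map fsh l).
      change (length ((s, as0) :: l)) with (S (length l)).
      replace (nu0 + Z.of_nat (S (length l)) * (-C*r)) with
        (nu0 + -C*r + Z.of_nat (length l) * (-C*r)) by (rewrite Nat2Z.inj_succ; ring).
      exact IH.
Qed.

Lemma rhs_shift (v : PV) n : 0 < q ->
  rhs (fun n => ceil_div (r*n) q)
    (mkPV (map fsh (blocks v)) (nu v + Z.of_nat (length (blocks v)) * ((-C)*r))) n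
  = rhs (fun n => ceil_div (r*n) q) v n.
Proof.
  intro Hq. unfold rhs. simpl. destruct v as [bl nu0]. simpl.
  induction bl as [|b bl IH]; [simpl; ring|].
  change (length (b :: bl)) with (S (length bl)). cbn [map sumZ fold_right] in *.
  rewrite Nat2Z.inj_succ.
  assert (E : outer_arg (fun n => ceil_div (r*n) q) n (fsh b)
              = outer_arg (fun n => ceil_div (r*n) q) n b + C*q).
  { unfold outer_arg, fsh; simpl. ring. }
  rewrite E, ceil_shift by auto. unfold sumZ in *. nia.
Qed.
End Shift.

Theorem theorem4 (r q : Z) (v : PV) :
  0 < r -> 0 < q ->
  blocks v <> [] ->
  (forall b, In b (blocks v) -> snd b <> []) ->
  (forall b a, In b (blocks v) -> In a (snd b) -> 0 < a) ->
  formally_satisfies (fun n => ceil_div (r * n) q) v ->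
  (forall b, In b (blocks v) -> r * Z.of_nat (length (snd b)) <= q) ->
  (exists v' : PV, pv_equiv r q v v' /\
     exists m : Z, 0 < m /\ generates v' m (fun n => ceil_div (r * n) q)) /\
  ((forall b, In b (blocks v) -> r * Z.of_nat (length (snd b)) < q) ->
     exists m : Z, 0 < m /\ generates v m (fun n => ceil_div (r * n) q)).
Proof.
  intros Hr Hq _ Hne Hpos Hf Hrp. split.
  - destruct (uniform_C (fun b : Z * list Z => Z.abs (fst b) + Z.of_nat (length (snd b)))
                (blocks v)) as [C [HC HCb]].
    exists (mkPV (map (fsh q C) (blocks v))
                 (nu v + Z.of_nat (length (blocks v)) * ((-C)*r))).
    split.
    + destruct v as [bl nu0]. unfold pv_equiv.
      exact (equiv_shift r q C bl [] nu0).
    + apply gen_of_blocks.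
      * intros b' Hb'. apply in_map_iff in Hb'. destruct Hb' as [b [<- Hb]].
        destruct b as [s l]. unfold fsh. cbn [fst snd].
        specialize (HCb _ Hb). cbn [fst snd] in HCb.
        apply block_ok; [exact Hr|exact Hq|exact (Hne _ Hb)|intros a Ha; exact (Hpos _ a Hb Ha)|exact (Hrp _ Hb)|left; nia].
      * intro n. rewrite rhs_shift by auto. apply Hf.
  - intros Hlt. apply gen_of_blocks.
    + intros [s l] Hb. apply block_ok; [exact Hr|exact Hq|exact (Hne _ Hb)|intros a Ha; exact (Hpos _ a Hb Ha)|exact (Hrp _ Hb)|right; exact (Hlt _ Hb)].
    + exact Hf.
Qed.
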